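(* Let $p>1$, $p'=p/(p-1)$, $C>0$, and define on $\Omega_C=\{(F,\mathbf{f},M):\mathbf{f}\ge0,\ \mathbf{f}^p\le F,\ 0\le M\le C\}$ $$\mathbb{B}(F,\mathbf{f},M;C)=C\left[(p')^pF-\frac{(p\mathbf{f})^p}{(p-1)\,(M/C+p-1)^{p-1}}\right].$$ Then $0\le\mathbb{B}(F,\mathbf{f},M;C)\le(p')^pCF$, $\mathbb{B}(t^pF,t\mathbf{f},M;C)=t^p\mathbb{B}(F,\mathbf{f},M;C)$ for $t\ge0$, and for all triples $(F,\mathbf{f},M),(F_\pm,\mathbf{f}_\pm,M_\pm)\in\Omega_C$ with $F=\tfrac12(F_++F_-)$, $\mathbf{f}=\tfrac12(\mathbf{f}_++\mathbf{f}_-)$, $M=\Delta M+\tfrac12(M_++M_-)$, $0\le\Delta M\le M$, $$\mathbb{B}(F,\mathbf{f},M;C)\ge\tfrac12\{\mathbb{B}(F_+,\mathbf{f}_+,M_+;C)+\mathbb{B}(F_-,\mathbf{f}_-,M_-;C)\}+\Delta M\,\mathbf{f}^p.$$ *)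

(* Defs.v *)
From Stdlib Require Import Reals.
Open Scope R_scope.

(* x^y for x >= 0 (with 0^y = 0, y > 0); Stdlib's Rpower is only meaningful
   for x > 0 (Rpower 0 y = 1), so we patch the value at 0. *)
Definition rpow (x y : R) : R := if Rle_dec x 0 then 0 else Rpower x y.

Definition conj_exp (p : R) : R := p / (p - 1).

Definition inOmega (p C F f M : R) : Prop :=
  0 <= f /\ rpow f p <= F /\ 0 <= M /\ M <= C.

Definition Bell (p C F f M : R) : R :=
  C * (rpow (conj_exp p) p * F
       - rpow (p * f) p / ((p - 1) * rpow (M / C + p - 1) (p - 1))).

(* Main.v *)
Require Import Defs.
From Stdlib Require Import Reals Lra.
Open Scope R_scope.

Lemma rpow_pos x y : 0 < x -> rpow x y = Rpower x y.
Proof. intro h; unfold rpow; destruct (Rle_dec x 0); lra. Qed.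
Lemma rpow0 y : rpow 0 y = 0.
Proof. unfold rpow; destruct (Rle_dec 0 0); lra. Qed.
Lemma Rpower_gt0 x y : 0 < Rpower x y.
Proof. unfold Rpower; apply exp_pos. Qed.
Lemma rpow_ge0 x y : 0 <= rpow x y.
Proof. unfold rpow; destruct (Rle_dec x 0); [lra|]. left; apply Rpower_gt0. Qed.
Lemma ln_le1 x : 0 < x -> ln x <= x - 1.
Proof. intro h. pose proof (exp_ineq1_le (ln x)). rewrite exp_ln in H; lra. Qed.
Lemma Rpower_div a b z : 0 < a -> 0 < b -> Rpower (a / b) z = Rpower a z / Rpower b z.
Proof.
  intros ha hb. unfold Rpower, Rdiv. rewrite ln_mult, ln_Rinv; try lra.
  2: apply Rinv_0_lt_compat; lra.
  replace (z * (ln a + - ln b)) with (z * ln a + - (z * ln b)) by ring.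
  rewrite exp_plus, exp_Ropp. reflexivity.
Qed.
Lemma Rpower_split x p : 0 < x -> Rpower x p = x * Rpower x (p - 1).
Proof.
  intro h. replace p with (1 + (p - 1)) at 1 by ring.
  rewrite Rpower_plus, Rpower_1; auto.
Qed.
Lemma rpow_mul2 a b z : 0 <= a -> 0 <= b -> rpow (a * b) z = rpow a z * rpow b z.
Proof.
  intros ha hb. destruct ha as [ha|ha]; [|subst; rewrite Rmult_0_l, rpow0; ring].
  destruct hb as [hb|hb]; [|subst; rewrite Rmult_0_r, rpow0; ring].
  rewrite !rpow_pos; try nra. symmetry; apply Rpower_mult_distr; auto.
Qed.

Lemma bern p u : 1 < p -> 0 < u -> p * u <= Rpower u p + (p - 1).
Proof.
  intros hp hu.
  set (U := Rpower u p).
  assert (hU : 0 < U) by apply Rpower_gt0.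
  set (A := (U + (p - 1)) / p).
  assert (hA : 0 < A) by (unfold A; apply Rdiv_lt_0_compat; lra).
  assert (hpA : p * A = U + (p - 1)) by (unfold A; field; lra).
  pose proof (ln_le1 (U / A)) as h1.
  pose proof (ln_le1 (/ A)) as h2.
  assert (hUA : 0 < U / A) by (apply Rdiv_lt_0_compat; lra).
  assert (hiA : 0 < / A) by (apply Rinv_0_lt_compat; lra).
  specialize (h1 hUA). specialize (h2 hiA).
  unfold Rdiv in h1. rewrite ln_mult, ln_Rinv in h1; try lra.
  rewrite ln_Rinv in h2; try lra.
  unfold U in h1. rewrite ln_Rpower in h1. fold U in h1.
  assert (hs : U * / A + (p - 1) * / A = p).
  { rewrite <- Rmult_plus_distr_r, <- hpA. field. lra. }
  assert (hl : ln u <= ln A) by nra.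
  destruct (Rle_lt_dec u A) as [h|h]; [nra|].
  pose proof (ln_increasing A u hA h). lra.
Qed.

Lemma bern' p u : 1 < p -> 0 <= u -> p * u <= rpow u p + (p - 1).
Proof.
  intros hp [hu|hu]; [rewrite rpow_pos; auto; apply bern; auto|subst; rewrite rpow0; lra].
Qed.

Lemma tang p g y r : 1 < p -> 0 <= g -> 0 < y -> 0 <= r ->
  p * rpow r (p - 1) * g - (p - 1) * rpow r p * y <= rpow g p / rpow y (p - 1).
Proof.
  intros hp hg hy hr.
  rewrite (rpow_pos y) by auto.
  assert (hY : 0 < Rpower y (p - 1)) by apply Rpower_gt0.
  assert (0 <= rpow g p / Rpower y (p - 1)).
  { unfold Rdiv; apply Rmult_le_pos; [apply rpow_ge0|left; apply Rinv_0_lt_compat; lra]. }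
  destruct hr as [hr|hr]; [|subst; rewrite !rpow0; lra].
  destruct hg as [hg|hg]; [|subst; rewrite rpow0; unfold Rdiv; rewrite Rmult_0_l; pose proof (rpow_ge0 r p); assert (0 <= (p-1) * rpow r p * y) by (apply Rmult_le_pos; [apply Rmult_le_pos|]; lra); nra].
  rewrite !rpow_pos by auto.
  set (u := g / (r * y)).
  assert (hu : 0 < u) by (unfold u; apply Rdiv_lt_0_compat; nra).
  pose proof (bern p u hp hu) as hb.
  unfold u in hb. rewrite Rpower_div in hb by nra.
  rewrite <- Rpower_mult_distr in hb by auto.
  rewrite (Rpower_split r p), (Rpower_split y p) in hb by auto.
  rewrite (Rpower_split r p) by auto.
  set (Rp := Rpower r (p - 1)) in *. set (Yp := Rpower y (p - 1)) in *.
  set (Gp := Rpower g p) in *.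
  assert (hRp : 0 < Rp) by apply Rpower_gt0.
  apply Rmult_le_compat_l with (r := r * Rp * y) in hb; [|left; apply Rmult_lt_0_compat; [apply Rmult_lt_0_compat|]; lra].
  replace (r * Rp * y * (p * (g / (r * y)))) with (p * Rp * g) in hb by (field; lra).
  replace (r * Rp * y * (Gp / (r * Rp * (y * Yp)) + (p - 1))) with
    (Gp / Yp + (p - 1) * (r * Rp) * y) in hb by (field; lra).
  lra.
Qed.

Lemma conv p f1 f2 D1 D2 : 1 < p -> 0 <= f1 -> 0 <= f2 -> 0 < D1 -> 0 < D2 ->
  rpow ((f1 + f2) / 2) p / rpow ((D1 + D2) / 2) (p - 1) <=
  (rpow f1 p / rpow D1 (p - 1) + rpow f2 p / rpow D2 (p - 1)) / 2.
Proof.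
  intros hp h1 h2 hD1 hD2.
  set (f := (f1 + f2) / 2). set (D := (D1 + D2) / 2).
  assert (hD : 0 < D) by (unfold D; lra).
  assert (hf : 0 <= f) by (unfold f; lra).
  set (r := f / D).
  assert (hr : 0 <= r) by (unfold r, Rdiv; apply Rmult_le_pos; [lra|left; apply Rinv_0_lt_compat; lra]).
  pose proof (tang p f1 D1 r hp h1 hD1 hr) as t1.
  pose proof (tang p f2 D2 r hp h2 hD2 hr) as t2.
  assert (E : p * rpow r (p - 1) * f - (p - 1) * rpow r p * D = rpow f p / rpow D (p - 1)).
  { destruct hf as [hf|hf].
    - assert (hr' : 0 < r) by (unfold r; apply Rdiv_lt_0_compat; lra).
      assert (hfr : f = r * D) by (unfold r; field; lra).
      rewrite !rpow_pos by auto.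
      rewrite hfr, <- Rpower_mult_distr by auto.
      rewrite (Rpower_split r p), (Rpower_split D p) by auto.
      pose proof (Rpower_gt0 D (p - 1)). field. lra.
    - assert (r = 0) by (unfold r; rewrite <- hf; unfold Rdiv; ring).
      rewrite H, <- hf, !rpow0. unfold Rdiv; ring. }
  rewrite <- E. unfold f, D in *. lra.
Qed.

Lemma tang2 a x y : 0 < a -> 0 < x -> 0 < y ->
  / Rpower x a - a * (y - x) / (x * Rpower x a) <= / Rpower y a.
Proof.
  intros ha hx hy.
  set (v := y / x).
  assert (hv : 0 < v) by (unfold v; apply Rdiv_lt_0_compat; lra).
  assert (h : 1 - a * (v - 1) <= / Rpower v a).
  { rewrite <- Rpower_Ropp. unfold Rpower.
    pose proof (exp_ineq1_le (- a * ln v)). pose proof (ln_le1 v hv). nra. }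
  unfold v in h. rewrite Rpower_div in h by auto.
  pose proof (Rpower_gt0 x a). pose proof (Rpower_gt0 y a).
  set (X := Rpower x a) in *. set (Y := Rpower y a) in *.
  replace (/ (Y / X)) with (X * / Y) in h by (field; lra).
  apply Rmult_le_compat_l with (r := / X) in h; [|left; apply Rinv_0_lt_compat; lra].
  replace (/ X * (X * / Y)) with (/ Y) in h by (field; lra).
  replace (/ X * (1 - a * (y / x - 1))) with (/ X - a * (y - x) / (x * X)) in h by (field; lra).
  exact h.
Qed.

Lemma MC_ge0 M C : 0 < C -> 0 <= M -> 0 <= M / C.
Proof. intros; unfold Rdiv; apply Rmult_le_pos; [lra|left; apply Rinv_0_lt_compat; lra]. Qed.

Lemma Bell_eq p C F f M : 1 < p -> 0 < C -> 0 <= f -> 0 <= M ->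
  Bell p C F f M = C * (Rpower p p / Rpower (p - 1) p * F
     - Rpower p p / (p - 1) * (rpow f p * / Rpower (M / C + p - 1) (p - 1))).
Proof.
  intros hp hC hf hM. unfold Bell, conj_exp.
  pose proof (MC_ge0 M C hC hM) as hmc.
  set (mc := M / C) in *.
  rewrite (rpow_pos (p / (p - 1))) by (apply Rdiv_lt_0_compat; lra).
  rewrite Rpower_div by lra.
  rewrite (rpow_pos (mc + p - 1)) by lra.
  rewrite rpow_mul2 by lra. rewrite (rpow_pos p) by lra.
  pose proof (Rpower_gt0 (mc + p - 1) (p - 1)).
  pose proof (Rpower_gt0 (p - 1) p). field. repeat split; lra.
Qed.


Theorem mainTheorem10 (p C : R) (hp : 1 < p) (hC : 0 < C) :
  (forall F f M, inOmega p C F f M ->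
     0 <= Bell p C F f M /\ Bell p C F f M <= rpow (conj_exp p) p * C * F) /\
  (forall F f M t, inOmega p C F f M -> 0 <= t ->
     Bell p C (rpow t p * F) (t * f) M = rpow t p * Bell p C F f M) /\
  (forall F f M Fp fp Mp Fm fm Mm dM,
     inOmega p C F f M -> inOmega p C Fp fp Mp -> inOmega p C Fm fm Mm ->
     F = (Fp + Fm) / 2 -> f = (fp + fm) / 2 -> M = dM + (Mp + Mm) / 2 ->
     0 <= dM -> dM <= M ->
     Bell p C F f M >= (Bell p C Fp fp Mp + Bell p C Fm fm Mm) / 2 + dM * rpow f p).
Proof.
  assert (hPp : 0 < Rpower p p) by apply Rpower_gt0.
  assert (hc : rpow (conj_exp p) p = Rpower p p / Rpower (p - 1) p).
  { unfold conj_exp. rewrite rpow_pos by (apply Rdiv_lt_0_compat; lra).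
    apply Rpower_div; lra. }
  assert (hQ : Rpower (p - 1) p = (p - 1) * Rpower (p - 1) (p - 1)) by (apply Rpower_split; lra).
  pose proof (Rpower_gt0 (p - 1) (p - 1)) as hQ0.
  split; [|split].
  - intros F f M [hf [hfF [hM0 hMC]]].
    rewrite Bell_eq by auto. rewrite hc, hQ.
    pose proof (MC_ge0 M C hC hM0).
    set (X := Rpower (M / C + p - 1) (p - 1)).
    set (Q := Rpower (p - 1) (p - 1)) in *.
    assert (hXQ : Q <= X) by (apply Rle_Rpower_l; lra).
    assert (hX : 0 < X) by lra.
    pose proof (rpow_ge0 f p) as hfw.
    set (fw := rpow f p) in *.
    assert (h1 : / X <= / Q) by (apply Rinv_le_contravar; lra).
    assert (h2 : fw * / X <= fw * / Q) by (apply Rmult_le_compat_l; lra).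
    assert (h3 : 0 <= fw * / X) by (apply Rmult_le_pos; [lra|left; apply Rinv_0_lt_compat; lra]).
    assert (e : Rpower p p / ((p - 1) * Q) * F - Rpower p p / (p - 1) * (fw * / Q)
                = Rpower p p / (p - 1) * / Q * (F - fw)) by (field; lra).
    assert (h4 : 0 <= Rpower p p / (p - 1) * / Q * (F - fw)).
    { apply Rmult_le_pos; [|lra]. apply Rmult_le_pos; [unfold Rdiv; apply Rmult_le_pos; [lra|left; apply Rinv_0_lt_compat; lra]|left; apply Rinv_0_lt_compat; lra]. }
    assert (h5 : 0 <= Rpower p p / (p - 1)) by (unfold Rdiv; apply Rmult_le_pos; [lra|left; apply Rinv_0_lt_compat; lra]).
    assert (h6 : Rpower p p / (p - 1) * (fw * / X) <= Rpower p p / (p - 1) * (fw * / Q)) by (apply Rmult_le_compat_l; lra).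
    assert (h7 : 0 <= Rpower p p / (p - 1) * (fw * / X)) by (apply Rmult_le_pos; lra).
    split.
    + apply Rmult_le_pos; lra.
    + assert (C * (Rpower p p / ((p - 1) * Q) * F - Rpower p p / (p - 1) * (fw * / X))
             = Rpower p p / ((p - 1) * Q) * C * F - C * (Rpower p p / (p - 1) * (fw * / X))) by ring.
      nra.
  - intros F f M t [hf [hfF [hM0 hMC]]] ht.
    rewrite !Bell_eq by (auto; nra).
    rewrite rpow_mul2 by auto. ring.
  - intros F f M Fp fp Mp Fm fm Mm dM [hf [_ [hM0 hMC]]] [hfp [_ [hMp0 hMpC]]]
      [hfm [_ [hMm0 hMmC]]] eF ef eM hd0 hdM.
    rewrite !Bell_eq by auto.
    pose proof (MC_ge0 Mp C hC hMp0). pose proof (MC_ge0 Mm C hC hMm0).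
    pose proof (MC_ge0 M C hC hM0). pose proof (MC_ge0 dM C hC hd0).
    assert (hMC1 : M / C <= 1) by (replace 1 with (C / C) by (field; lra); apply Rmult_le_compat_r; [left; apply Rinv_0_lt_compat|]; lra).
    assert (em : M / C = dM / C + (Mp / C + Mm / C) / 2) by (rewrite eM; field; lra).
    assert (hdm : dM / C <= M / C) by (apply Rmult_le_compat_r; [left; apply Rinv_0_lt_compat|]; lra).
    set (mp := Mp / C) in *. set (mm := Mm / C) in *. set (m := M / C) in *. set (d := dM / C) in *.
    set (Dp := mp + p - 1) in *. set (Dm := mm + p - 1) in *.
    set (D := m + p - 1).
    assert (eD : (Dp + Dm) / 2 = D - d) by (unfold Dp, Dm, D; lra).
    pose proof (conv p fp fm Dp Dm hp hfp hfm ltac:(unfold Dp; lra) ltac:(unfold Dm; lra)) as hcv.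
    rewrite <- ef, eD in hcv.
    assert (hDp : 0 < D - d) by (unfold D; lra).
    rewrite (rpow_pos Dp), (rpow_pos Dm) in hcv by (unfold Dp, Dm; lra).
    rewrite (rpow_pos (D - d)) in hcv by lra.
    pose proof (tang2 (p - 1) D (D - d) ltac:(lra) ltac:(unfold D; lra) hDp) as ht.
    assert (hDP : Rpower D p <= Rpower p p) by (apply Rle_Rpower_l; unfold D; lra).
    assert (hDs : Rpower D p = D * Rpower D (p - 1)) by (apply Rpower_split; unfold D; lra).
    pose proof (Rpower_gt0 D (p - 1)) as hX.
    pose proof (rpow_ge0 f p) as hfw.
    pose proof (rpow_ge0 fp p). pose proof (rpow_ge0 fm p).
    set (X := Rpower D (p - 1)) in *.
    set (Y := / Rpower (D - d) (p - 1)) in *.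
    set (fw := rpow f p) in *. set (fwp := rpow fp p) in *. set (fwm := rpow fm p) in *.
    set (Xp := Rpower Dp (p - 1)) in *. set (Xm := Rpower Dm (p - 1)) in *.
    set (W := Rpower D p) in *.
    assert (hD0 : 0 < D) by (unfold D; lra).
    assert (hW : 0 < W) by (rewrite hDs; nra).
    assert (hy : / X + (p - 1) * d / W <= Y).
    { replace (/ X + (p - 1) * d / W) with (/ X - (p - 1) * (D - d - D) / (D * X)); [lra|].
      rewrite hDs. field. lra. }
    assert (hcv' : fw * Y <= (fwp / Xp + fwm / Xm) / 2) by (unfold Y; exact hcv).
    assert (h1 : fw * (/ X + (p - 1) * d / W) <= fw * Y) by (apply Rmult_le_compat_l; lra).
    set (K := Rpower p p / (p - 1)).
    set (c := Rpower p p / Rpower (p - 1) p).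
    assert (hK : 0 < K) by (unfold K; apply Rdiv_lt_0_compat; lra).
    assert (h2 : fw * (p - 1) * d / W <= (fwp / Xp + fwm / Xm) / 2 - fw * / X).
    { replace (fw * (p - 1) * d / W) with (fw * (/ X + (p - 1) * d / W) - fw * / X) by (field; lra). lra. }
    assert (h3 : C * K * (fw * (p - 1) * d / W) <= C * K * ((fwp / Xp + fwm / Xm) / 2 - fw * / X)).
    { apply Rmult_le_compat_l; [|exact h2]. left; apply Rmult_lt_0_compat; lra. }
    assert (e3 : C * K * (fw * (p - 1) * d / W) = dM * fw * (Rpower p p / W)).
    { unfold K, d. field. repeat split; lra. }
    assert (h4 : 1 <= Rpower p p / W).
    { replace 1 with (W / W) by (field; lra). apply Rmult_le_compat_r; [left; apply Rinv_0_lt_compat|]; lra. }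
    assert (h5 : dM * fw <= dM * fw * (Rpower p p / W)).
    { rewrite <- (Rmult_1_r (dM * fw)) at 1. apply Rmult_le_compat_l; [apply Rmult_le_pos|]; lra. }
    rewrite eF. apply Rle_ge.
    replace (C * (c * ((Fp + Fm) / 2) - K * (fw * / X))) with
      ((C * (c * Fp - K * (fwp * / Xp)) + C * (c * Fm - K * (fwm * / Xm))) / 2
       + C * K * ((fwp / Xp + fwm / Xm) / 2 - fw * / X)) by (unfold Rdiv; ring).
    lra.
Qed.
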